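(* Let $\bm{L}\in\mathbb{R}^{m\times n}$ have rank $r$ and compact SVD $\bm{L}=\bm{W}_{\bm{L}}\bm{\Sigma}_{\bm{L}}\bm{V}_{\bm{L}}^T$, and suppose $\max_{i}\|\bm{W}_{\bm{L}}^T\bm{e}_i\|_2\leq\sqrt{\mu_1(\bm{L}) r/m}$ and $\max_{i}\|\bm{V}_{\bm{L}}^T\bm{e}_i\|_2\leq\sqrt{\mu_2(\bm{L}) r/n}$. Let $J\subseteq[n]$ and $\bm{C}=\bm{L}(:,J)$. Then \begin{enumerate} \item $\|\bm{C}\|_2\leq\sqrt{\frac{\mu_2(\bm{L})r|J|}{n}}\,\|\bm{L}\|_2$; \item $\kappa(\bm{C})\leq\sqrt{\mu_2(\bm{L}) r}\,\kappa(\bm{L})\sqrt{\frac{|J|}{n}}\,\|\bm{V}_{\bm{L}}(J,:)^\dagger\|_2$. \end{enumerate}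
   Context: $[n]=\{1,\dots,n\}$; $\bm{A}(I,J)$ denotes a submatrix ('':'' meaning all indices); $\bm{A}^\dagger$ is the Moore–Penrose pseudoinverse; $\kappa(\bm{A})=\|\bm{A}\|_2\|\bm{A}^\dagger\|_2=\sigma_{\max}(\bm{A})/\sigma_{\min}(\bm{A})$ with $\sigma_{\min}$ the smallest nonzero singular value. *)

(* Defs.v *)
From HB Require Import structures.
From mathcomp Require Import all_boot all_order all_algebra.
From mathcomp Require Import boolp classical_sets reals.
Set Implicit Arguments. Unset Strict Implicit. Unset Printing Implicit Defensive.
Import Order.TTheory GRing.Theory Num.Theory.
Local Open Scope ring_scope.
Local Open Scope classical_set_scope.

Section Defs.
Variable R : realType.

Definition vnorm2 n (x : 'cV[R]_n) : R := Num.sqrt (\sum_(i < n) x i 0 ^+ 2).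

Definition opnorm2 m n (A : 'M[R]_(m, n)) : R :=
  sup [set y : R | exists x : 'cV[R]_n, vnorm2 x <= 1 /\ y = vnorm2 (A *m x)].

Definition penrose m n (A : 'M[R]_(m, n)) (X : 'M[R]_(n, m)) : Prop :=
  [/\ A *m X *m A = A, X *m A *m X = X,
      (A *m X)^T = A *m X & (X *m A)^T = X *m A].

Definition pinv m n (A : 'M[R]_(m, n)) : 'M[R]_(n, m) := xget 0 [set X | penrose A X].

(* condition number kappa(A) = ||A||_2 ||A^+||_2 = sigma_max / sigma_min(nonzero) *)
Definition kappa m n (A : 'M[R]_(m, n)) : R := opnorm2 A * opnorm2 (pinv A).

Definition compact_svd m n r (L : 'M[R]_(m, n)) (W : 'M[R]_(m, r))
    (s : 'rV[R]_r) (V : 'M[R]_(n, r)) : Prop :=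
  [/\ L = W *m diag_mx s *m V^T, W^T *m W = 1%:M, V^T *m V = 1%:M
    & forall k, 0 < s 0 k].

Definition colsJ m n (L : 'M[R]_(m, n)) (J : {set 'I_n}) : 'M[R]_(m, #|J|) :=
  colsub (fun k : 'I_#|J| => enum_val k) L.

Definition rowsJ n r (V : 'M[R]_(n, r)) (J : {set 'I_n}) : 'M[R]_(#|J|, r) :=
  rowsub (fun k : 'I_#|J| => enum_val k) V.

End Defs.

(* Main.v *)
Require Import Defs.
From HB Require Import structures.
From mathcomp Require Import all_boot all_order all_algebra.
From mathcomp Require Import boolp classical_sets reals.
From mathcomp Require Import ring lra.
Set Implicit Arguments. Unset Strict Implicit. Unset Printing Implicit Defensive.
Import Order.TTheory GRing.Theory Num.Theory.
Local Open Scope ring_scope.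

Section Aux.
Variable R : realType.

Lemma sqr_sum_le n (a b : 'I_n -> R) :
  (\sum_i a i * b i) ^+ 2 <= (\sum_i a i ^+ 2) * (\sum_i b i ^+ 2).
Proof.
set A := \sum_i a i ^+ 2; set B := \sum_i b i ^+ 2; set D := \sum_i a i * b i.
have A0 : 0 <= A by apply: sumr_ge0 => i _; exact: sqr_ge0.
have B0 : 0 <= B by apply: sumr_ge0 => i _; exact: sqr_ge0.
have key : \sum_i (A * b i - D * a i) ^+ 2 = A * (A * B - D ^+ 2).
  transitivity (\sum_i (A ^+ 2 * b i ^+ 2 - (2 * A * D) * (a i * b i)
                         + D ^+ 2 * a i ^+ 2)).
    by apply: eq_bigr => i _; ring.
  rewrite big_split /= sumrB -!mulr_sumr -/A -/B -/D; ring.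
have : 0 <= A * (A * B - D ^+ 2).
  by rewrite -key; apply: sumr_ge0 => i _; exact: sqr_ge0.
have [Agt0|Ale0 _] := ltP 0 A.
  by rewrite pmulr_rge0 // subr_ge0.
have A00 : A = 0 by apply/le_anti; rewrite Ale0 A0.
have a0 : forall i, a i = 0.
  move=> i; apply/eqP; rewrite -sqrf_eq0; apply/eqP.
  by apply: (psumr_eq0P _ A00) => // j _; exact: sqr_ge0.
have D0 : D = 0 by rewrite /D big1 // => i _; rewrite a0 mul0r.
by rewrite D0 A00 expr2 !mul0r.
Qed.

Definition dot n (x y : 'cV[R]_n) : R := \sum_i x i 0 * y i 0.

Lemma dotE n (x y : 'cV[R]_n) : dot x y = (x^T *m y) 0 0.
Proof. by rewrite /dot !mxE; apply: eq_bigr => i _; rewrite mxE. Qed.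

Lemma dot_ge0 n (x : 'cV[R]_n) : 0 <= dot x x.
Proof. by apply: sumr_ge0 => i _; rewrite -expr2 sqr_ge0. Qed.

Lemma vnormE n (x : 'cV[R]_n) : vnorm2 x = Num.sqrt (dot x x).
Proof. by rewrite /vnorm2 /dot; congr Num.sqrt; apply: eq_bigr => i _; rewrite expr2. Qed.

Lemma vnorm_ge0 n (x : 'cV[R]_n) : 0 <= vnorm2 x.
Proof. exact: sqrtr_ge0. Qed.

Lemma vnorm_sqr n (x : 'cV[R]_n) : vnorm2 x ^+ 2 = dot x x.
Proof. by rewrite vnormE sqr_sqrtr // dot_ge0. Qed.

Lemma dot0 n (x : 'cV[R]_n) : dot x x = 0 -> x = 0.
Proof.
move=> H; apply/matrixP => i j; rewrite (ord1 j) mxE; apply/eqP; rewrite -sqrf_eq0 expr2.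
by apply/eqP; apply: (psumr_eq0P _ H) => // k _; rewrite -expr2 sqr_ge0.
Qed.

Lemma CS n (x y : 'cV[R]_n) : dot x y <= vnorm2 x * vnorm2 y.
Proof.
apply: le_trans (ler_norm _) _.
rewrite -sqrtr_sqr !vnormE -sqrtrM ?dot_ge0 //; apply: ler_wsqrtr.
have := sqr_sum_le (fun i => x i 0) (fun i => y i 0).
by rewrite /dot; congr (_ <= _ * _); apply: eq_bigr => i _; rewrite expr2.
Qed.

Lemma sq_le (a b : R) : 0 <= a -> 0 <= b -> a ^+ 2 <= b * a -> a <= b.
Proof. move=> *; nra. Qed.

Definition frob m n (A : 'M[R]_(m, n)) := Num.sqrt (\sum_i \sum_j A i j ^+ 2).

Lemma frob_ge0 m n (A : 'M[R]_(m, n)) : 0 <= frob A.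
Proof. exact: sqrtr_ge0. Qed.

Lemma frob_bound m n (A : 'M[R]_(m, n)) x : vnorm2 (A *m x) <= frob A * vnorm2 x.
Proof.
rewrite /frob /vnorm2 -sqrtrM; last by apply: sumr_ge0 => i _; apply: sumr_ge0 => j _; exact: sqr_ge0.
apply: ler_wsqrtr; rewrite mulr_suml; apply: ler_sum => i _.
rewrite mxE; exact: sqr_sum_le.
Qed.

Lemma vnormZ n (c : R) (x : 'cV[R]_n) : vnorm2 (c *: x) = `|c| * vnorm2 x.
Proof.
rewrite /vnorm2 -sqrtr_sqr -sqrtrM ?sqr_ge0 //; congr Num.sqrt.
rewrite mulr_sumr; apply: eq_bigr => i _; rewrite mxE; ring.
Qed.

Lemma vnorm0 n : vnorm2 (0 : 'cV[R]_n) = 0.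
Proof. by rewrite -(scale0r (0 : 'cV[R]_n)) vnormZ normr0 mul0r. Qed.

Lemma opnorm_has_sup m n (A : 'M[R]_(m, n)) :
  has_sup [set y : R | exists x : 'cV[R]_n, vnorm2 x <= 1 /\ y = vnorm2 (A *m x)].
Proof.
rewrite /has_sup; split; first by exists 0; exists 0; split; [rewrite vnorm0 ler01 | rewrite mulmx0 vnorm0].
exists (frob A) => y [x [x1 ->]].
apply: le_trans (frob_bound A x) _.
by rewrite -[X in _ <= X]mulr1 ler_wpM2l // frob_ge0.
Qed.

Lemma opnorm_ge0 m n (A : 'M[R]_(m, n)) : 0 <= opnorm2 A.
Proof.
apply: sup_upper_bound (opnorm_has_sup A) _ _.
by exists 0; split; [rewrite vnorm0 ler01 | rewrite mulmx0 vnorm0].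
Qed.

Lemma opnorm_bound m n (A : 'M[R]_(m, n)) x : vnorm2 (A *m x) <= opnorm2 A * vnorm2 x.
Proof.
have [x0|xn0] := eqVneq (vnorm2 x) 0.
  apply: le_trans (frob_bound A x) _; rewrite x0 !mulr0 //.
have xp : 0 < vnorm2 x by rewrite lt_def xn0 vnorm_ge0.
have H : vnorm2 (A *m ((vnorm2 x)^-1 *: x)) <= opnorm2 A.
  apply: sup_upper_bound (opnorm_has_sup A) _ _.
  exists ((vnorm2 x)^-1 *: x); split => //.
  by rewrite vnormZ ger0_norm ?invr_ge0 ?vnorm_ge0 // mulVf.
move: H; rewrite -scalemxAr vnormZ ger0_norm ?invr_ge0 ?vnorm_ge0 //.
by rewrite ler_pdivrMl // mulrC.
Qed.

Lemma opnorm_le m n (A : 'M[R]_(m, n)) K : 0 <= K ->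
  (forall x, vnorm2 (A *m x) <= K * vnorm2 x) -> opnorm2 A <= K.
Proof.
move=> K0 H; apply: ge_sup; first by exists 0; exists 0; split; [rewrite vnorm0 ler01 | rewrite mulmx0 vnorm0].
move=> y [x [x1 ->]]; apply: le_trans (H x) _.
by rewrite -[X in _ <= X]mulr1 ler_wpM2l.
Qed.

Lemma isom_vnorm m n (V : 'M[R]_(m, n)) y : V^T *m V = 1%:M -> vnorm2 (V *m y) = vnorm2 y.
Proof.
move=> H; rewrite !vnormE !dotE trmx_mul -mulmxA (mulmxA V^T) H mul1mx //.
Qed.

Lemma opnorm_tr m n (A : 'M[R]_(m, n)) : opnorm2 A^T <= opnorm2 A.
Proof.
apply: opnorm_le; first exact: opnorm_ge0.
move=> x; apply: sq_le; rewrite ?vnorm_ge0 ?mulr_ge0 ?vnorm_ge0 ?opnorm_ge0 //.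
rewrite vnorm_sqr dotE trmx_mul trmxK -mulmxA -dotE.
apply: le_trans (CS _ _) _.
rewrite (mulrC (opnorm2 A)) -mulrA ler_wpM2l ?vnorm_ge0 //.
exact: opnorm_bound.
Qed.

Lemma proj_contract n (P : 'M[R]_n) z : P^T = P -> P *m P = P -> vnorm2 (P *m z) <= vnorm2 z.
Proof.
move=> Ps Pi; apply: sq_le; rewrite ?vnorm_ge0 //.
rewrite vnorm_sqr dotE trmx_mul Ps mulmxA -(mulmxA z^T) Pi -mulmxA -dotE.
exact: CS.
Qed.

Lemma vnorm_le_pt n (a b : 'cV[R]_n) : (forall k, `|a k 0| <= `|b k 0|) -> vnorm2 a <= vnorm2 b.
Proof.
move=> H; apply: ler_wsqrtr; apply: ler_sum => i _.
rewrite -(real_normK (num_real (a i 0))) -(real_normK (num_real (b i 0))).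
have := H i; have := normr_ge0 (a i 0); nra.
Qed.


Lemma gram_unit k n (G : 'M[R]_(k, n)) : row_free G -> G *m G^T \in unitmx.
Proof.
move=> fG; rewrite -row_free_unit; apply: inj_row_free => v H.
have : dot (G^T *m v^T) (G^T *m v^T) = 0.
  by rewrite dotE trmx_mul !trmxK mulmxA -(mulmxA v) H mul0mx mxE.
move/dot0 => /(congr1 trmx); rewrite trmx_mul !trmxK trmx0 => /eqP.
by rewrite mulmx_free_eq0 // => /eqP.
Qed.

Lemma penrose_fact m k n (F : 'M[R]_(m, k)) (G : 'M[R]_(k, n)) :
  F^T *m F \in unitmx -> G *m G^T \in unitmx -> exists X, penrose (F *m G) X.
Proof.
move=> uM uN.
set M := F^T *m F in uM *; set N := G *m G^T in uN *.
set X := G^T *m invmx N *m invmx M *m F^T.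
exists X.
have AX : F *m G *m X = F *m invmx M *m F^T.
  rewrite /X !mulmxA -(mulmxA F G) -/N -(mulmxA F N) mulmxV // mulmx1 //.
have XA : X *m (F *m G) = G^T *m invmx N *m G.
  rewrite /X !mulmxA -(mulmxA _ F^T F) -/M -(mulmxA _ (invmx M) M) mulVmx // mulmx1 //.
have Ms : M^T = M by rewrite /M trmx_mul trmxK.
have Ns : N^T = N by rewrite /N trmx_mul trmxK.
split.
- rewrite AX !mulmxA -(mulmxA _ F^T F) -/M -(mulmxA _ _ M) mulVmx // mulmx1 //.
- rewrite XA /X !mulmxA -(mulmxA _ G G^T) -/N -(mulmxA _ _ N) mulVmx // mulmx1 //.
- by rewrite AX !trmx_mul trmxK trmx_inv Ms mulmxA.
- by rewrite XA !trmx_mul trmxK trmx_inv Ns mulmxA.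
Qed.

Lemma pinvP m n (A : 'M[R]_(m, n)) : penrose A (pinv A).
Proof.
apply: xgetPex.
have uN := gram_unit (row_base_free A).
have uM : (col_base A)^T *m col_base A \in unitmx.
  have := @gram_unit _ _ (col_base A)^T; rewrite trmxK; apply.
  by rewrite /row_free mxrank_tr; exact: col_base_full.
by have := penrose_fact uM uN; rewrite mulmx_base.
Qed.

End Aux.
Theorem lemma4p4 (R : realType) (m n r : nat) (L : 'M[R]_(m, n))
  (W : 'M[R]_(m, r)) (s : 'rV[R]_r) (V : 'M[R]_(n, r)) (mu1 mu2 : R) :
  \rank L = r ->
  compact_svd L W s V ->
  (forall i : 'I_m, vnorm2 (row i W)^T <= Num.sqrt (mu1 * r%:R / m%:R)) ->
  (forall i : 'I_n, vnorm2 (row i V)^T <= Num.sqrt (mu2 * r%:R / n%:R)) ->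
  forall J : {set 'I_n},
    let C := colsJ L J in
    opnorm2 C <= Num.sqrt (mu2 * r%:R * #|J|%:R / n%:R) * opnorm2 L /\
    kappa C <= Num.sqrt (mu2 * r%:R) * kappa L * Num.sqrt (#|J|%:R / n%:R)
               * opnorm2 (pinv (rowsJ V J)).
Proof.
move=> _ [Leq WtW VtV spos] _ hV J C.
set B := rowsJ V J.
have Ceq : C = W *m diag_mx s *m B^T.
  rewrite /C /colsJ Leq -mulmx_colsub; congr (_ *m _).
  by apply/matrixP => i j; rewrite !mxE.
have LV : L *m V = W *m diag_mx s by rewrite Leq -mulmxA VtV mulmx1.
set K1 := Num.sqrt (mu2 * r%:R * #|J|%:R / n%:R).
have K1ge0 : 0 <= K1 by exact: sqrtr_ge0.
have frobB : frob B^T <= K1.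
  set c := mu2 * r%:R / n%:R.
  have hrow : forall j : 'I_#|J|, \sum_i B^T i j ^+ 2 <= Num.sqrt c ^+ 2.
    move=> j; have := hV (enum_val j).
    rewrite /vnorm2 => h.
    have h2 := ler_pM (sqrtr_ge0 _) (sqrtr_ge0 _) h h.
    rewrite -expr2 -expr2 sqr_sqrtr in h2; last by apply: sumr_ge0 => i _; exact: sqr_ge0.
    apply: le_trans h2; rewrite le_eqVlt; apply/orP; left; apply/eqP; apply: eq_bigr => i _; rewrite !mxE //.
  have hsum : \sum_i \sum_j B^T i j ^+ 2 <= Num.sqrt c ^+ 2 * #|J|%:R.
    rewrite exchange_big /=.
    apply: le_trans (ler_sum _ (fun j _ => hrow j)) _.
    by rewrite sumr_const card_ord mulr_natr.
  have [c0|c0] := leP 0 c.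
    rewrite /frob /K1; apply: ler_wsqrtr; apply: le_trans hsum _.
    by rewrite sqr_sqrtr // /c; rewrite le_eqVlt; apply/orP; left; apply/eqP; ring.
  move: hsum; rewrite ltr0_sqrtr // expr0n /= mul0r => hsum.
  rewrite /frob; apply: le_trans K1ge0; rewrite ler0_sqrtr //.
have part1 : opnorm2 C <= K1 * opnorm2 L.
  apply: opnorm_le; first by rewrite mulr_ge0 // opnorm_ge0.
  move=> x.
  have Cx : C *m x = L *m (V *m (B^T *m x)) by rewrite Ceq !mulmxA LV.
  rewrite Cx; apply: le_trans (opnorm_bound _ _) _.
  rewrite isom_vnorm // [K1 * _]mulrC -mulrA ler_wpM2l ?opnorm_ge0 //.
  apply: le_trans (frob_bound _ _) _.
  by rewrite ler_wpM2r ?vnorm_ge0.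
split => //.
have [CXC XCX CXs XCs] := pinvP C.
have [LYL _ _ _] := pinvP L.
have [BZB _ BZs _] := pinvP B.
set X := pinv C in CXC XCX CXs XCs *.
set Y := pinv L in LYL *.
set Z := pinv B in BZB BZs *.
have sY : forall k, 1 <= s 0 k * opnorm2 Y.
  move=> k.
  set e : 'cV[R]_r := delta_mx k 0.
  have ve : vnorm2 e = 1.
    by rewrite vnormE dotE /e trmx_delta mul_delta_mx mxE !eqxx /= sqrtr1.
  have De : diag_mx s *m e = s 0 k *: e.
    apply/matrixP => i j; rewrite mul_diag_mx !mxE.
    by case: (i =P k) => [->|] //=; rewrite !mulr0.
  set a := V *m ((s 0 k)^-1 *: e).
  have La : L *m a = W *m e.
    rewrite /a mulmxA LV -mulmxA -scalemxAr De scalerA mulVf ?scale1r //.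
    by apply/lt0r_neq0/spos.
  set w := Y *m (W *m e).
  have Lw : L *m w = W *m e by rewrite /w -La !mulmxA LYL.
  have WL : W^T *m L = diag_mx s *m V^T by rewrite Leq !mulmxA WtW mul1mx.
  have Vw : diag_mx s *m (V^T *m w) = e.
    by rewrite mulmxA -WL -mulmxA Lw mulmxA WtW mul1mx.
  have Vwk : s 0 k * (V^T *m w) k 0 = 1.
    by move/matrixP: Vw => /(_ k 0); rewrite mul_diag_mx !mxE !eqxx.
  have dk : (V^T *m w) k 0 = dot (V *m e) w.
    by rewrite dotE trmx_mul /e trmx_delta -mulmxA -rowE [RHS]mxE.
  have : (V^T *m w) k 0 <= opnorm2 Y.
    rewrite dk; apply: le_trans (CS _ _) _.
    rewrite isom_vnorm // ve mul1r.
    apply: le_trans (opnorm_bound _ _) _.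
    by rewrite isom_vnorm // ve mulr1.
  move=> h; rewrite -Vwk ler_wpM2l //; exact: ltW (spos k).
have Xb : opnorm2 X <= opnorm2 Y * opnorm2 Z.
  apply: opnorm_le; first by rewrite mulr_ge0 // opnorm_ge0.
  move=> z.
  set u := X *m z.
  set y := B^T *m u.
  have hCu : vnorm2 (C *m u) <= vnorm2 z.
    rewrite /u mulmxA; apply: proj_contract => //.
    by rewrite mulmxA CXC.
  have hCu' : vnorm2 (C *m u) = vnorm2 (diag_mx s *m y).
    by rewrite Ceq /y -!mulmxA isom_vnorm.
  have hy : vnorm2 y <= opnorm2 Y * vnorm2 (diag_mx s *m y).
    clear hCu hCu'; move: y => y'.
    rewrite -[opnorm2 Y]ger0_norm ?opnorm_ge0 // -vnormZ.
    apply: vnorm_le_pt => k.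
    rewrite mul_diag_mx !mxE !normrM (ger0_norm (opnorm_ge0 Y)).
    rewrite (ger0_norm (ltW (spos k))) mulrA [opnorm2 Y * _]mulrC.
    by rewrite -[X in X <= _]mul1r ler_wpM2r ?normr_ge0.
  have hu1 : u = X *m C *m u by rewrite /u mulmxA XCX.
  have hu2 : u = B *m (diag_mx s *m W^T *m X^T *m u).
    rewrite {1}hu1 -XCs trmx_mul Ceq !trmx_mul trmxK tr_diag_mx !mulmxA //.
  have hu3 : Z^T *m y = u.
    rewrite /y mulmxA -trmx_mul BZs {1}hu2 mulmxA BZB -hu2 //.
  rewrite -/u -hu3.
  apply: le_trans (opnorm_bound _ _) _.
  apply: le_trans (ler_wpM2r (vnorm_ge0 _) (opnorm_tr Z)) _.
  apply: le_trans (ler_wpM2l (opnorm_ge0 _) hy) _.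
  rewrite hCu' in hCu.
  rewrite mulrA [opnorm2 Z * _]mulrC ler_wpM2l //; exact: mulr_ge0 (opnorm_ge0 _) (opnorm_ge0 _).
have K1le : K1 <= Num.sqrt (mu2 * r%:R) * Num.sqrt (#|J|%:R / n%:R).
  have [h|h] := leP 0 (mu2 * r%:R).
    by rewrite -sqrtrM // mulrA.
  rewrite /K1 ler0_sqrtr ?mulr_ge0 ?sqrtr_ge0 //.
  rewrite -mulrA; apply: mulr_le0_ge0; first exact: ltW.
  by rewrite divr_ge0.
rewrite /kappa -/X -/Y -/Z.
apply: le_trans (ler_pM (opnorm_ge0 _) (opnorm_ge0 _) part1 Xb) _.
have e1 : K1 * opnorm2 L * (opnorm2 Y * opnorm2 Z) =
          K1 * (opnorm2 L * opnorm2 Y * opnorm2 Z) by ring.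
have e2 : Num.sqrt (mu2 * r%:R) * (opnorm2 L * opnorm2 Y) * Num.sqrt (#|J|%:R / n%:R) * opnorm2 Z
     = Num.sqrt (mu2 * r%:R) * Num.sqrt (#|J|%:R / n%:R) * (opnorm2 L * opnorm2 Y * opnorm2 Z) by ring.
rewrite e1 e2 ler_wpM2r //.
by rewrite !mulr_ge0 // opnorm_ge0.
Qed.
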